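(* For any path $\alpha:[0,1]\to\mathrm{Mult}_n(\mathbb{C})$ and any $\widetilde\alpha(0)\in\mathbb{C}^n$ with $\mathrm{Mult}(\widetilde\alpha(0))=\alpha(0)$, there exists a path $\widetilde\alpha:[0,1]\to\mathbb{C}^n$ starting at $\widetilde\alpha(0)$ with $\mathrm{Mult}\circ\widetilde\alpha=\alpha$, and this lifted path is unique when $\alpha$ has weakly increasing shape.
   Context: $\mathrm{Mult}_n(\mathbb{C})=\mathbb{C}^n/\mathrm{Sym}_n$ is the space of $n$-element multisets in $\mathbb{C}$ and $\mathrm{Mult}:\mathbb{C}^n\to\mathrm{Mult}_n(\mathbb{C})$ the quotient map. The shape of a multiset is the integer partition of $n$ formed by its multiplicities. Integer partitions of $n$ are ordered by $\lambda\le\mu$ iff $\mu$ is obtained from $\lambda$ by partitioning the parts of $\lambda$ into blocks and summing each block. A path $\alpha$ has weakly increasing shape if $s\le t$ implies $\mathrm{Shape}(\alpha(s))\le\mathrm{Shape}(\alpha(t))$. *)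

(* Defs.v *)
From HB Require Import structures.
From mathcomp Require Import all_boot all_order all_algebra.
From mathcomp Require Import finmap multiset.
From mathcomp Require Import complex.
From mathcomp Require Import reals.

Set Implicit Arguments.
Unset Strict Implicit.
Unset Printing Implicit Defensive.

Import Order.TTheory GRing.Theory Num.Theory.
Local Open Scope ring_scope.

Section MultDefs.
Variable R : realType.

Definition cdist (z w : R[i]) : R := Normc.normc (z - w).

Definition Cn (n : nat) := 'I_n -> R[i].

(* open subsets of C^n (the usual (product / Euclidean) topology, via the
   equivalent sup metric) *)
Definition openCn (n : nat) (A : Cn n -> Prop) : Prop :=
  forall x, A x -> exists2 e : R, 0 < e &
    forall y : Cn n, (forall i, cdist (y i) (x i) < e) -> A y.

Definition Mult (n : nat) (x : Cn n) : multiset R[i] :=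
  seq_mset [seq x i | i <- enum 'I_n].

(* Mult_n(C) is the image of Mult; a set U of multisets is open in the quotient
   topology iff its preimage under Mult is open in C^n *)
Definition in_Multn (n : nat) (m : multiset R[i]) : Prop :=
  exists x : Cn n, Mult x = m.

Definition openMultn (n : nat) (U : multiset R[i] -> Prop) : Prop :=
  openCn (fun x : Cn n => U (Mult x)).

Definition in01 (t : R) : Prop := 0 <= t <= 1.

Definition is_path_Multn (n : nat) (a : R -> multiset R[i]) : Prop :=
  (forall t, in01 t -> in_Multn n (a t)) /\
  (forall U, openMultn n U ->
     forall t, in01 t -> U (a t) ->
       exists2 d : R, 0 < d &
         forall s, in01 s -> `|s - t| < d -> U (a s)).

Definition is_path_Cn (n : nat) (b : R -> Cn n) : Prop :=
  forall t, in01 t -> forall e : R, 0 < e ->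
    exists2 d : R, 0 < d &
      forall s, in01 s -> `|s - t| < d -> forall i, cdist (b s i) (b t i) < e.

Definition Shape (m : multiset R[i]) : seq nat :=
  sort geq [seq m c | c <- enum_fset (finsupp m)].

End MultDefs.

(* partition order: lam <= mu iff mu is obtained from lam by partitioning the
   parts of lam into blocks and summing each block; f assigns each part of lam
   to the block (= part of mu) it belongs to *)
Definition part_le (lam mu : seq nat) : Prop :=
  exists f : 'I_(size lam) -> 'I_(size mu),
    forall j : 'I_(size mu),
      nth 0%N mu j = (\sum_(i < size lam | f i == j) nth 0%N lam i)%N.

Definition weakly_increasing_shape (R : realType) (a : R -> multiset R[i]) : Prop :=
  forall s t, in01 s -> in01 t -> s <= t -> part_le (Shape (a s)) (Shape (a t)).

(* Main.v *)
Require Import Defs.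
From HB Require Import structures.
From mathcomp Require Import all_boot all_order all_algebra.
From mathcomp Require Import finmap multiset complex reals.
From mathcomp Require Import lra zify.
From mathcomp Require classical_sets.
From Stdlib Require Import Classical ClassicalEpsilon FunctionalExtensionality.
Set Implicit Arguments.
Unset Strict Implicit.
Unset Printing Implicit Defensive.
Import Order.TTheory GRing.Theory Num.Theory.
Local Open Scope ring_scope.


Section Core.
Variable R : realType.
Variable T : eqType.
Variable x0 : T.
Variable d : T -> T -> R.
Hypothesis d_ge0 : forall x y, 0 <= d x y.
Hypothesis d_sym : forall x y, d x y = d y x.
Hypothesis d_tri : forall x y z, d x z <= d x y + d y z.
Hypothesis d_refl : forall x, d x x = 0.
Hypothesis d_eq : forall x y, d x y = 0 -> x = y.

Lemma absP (x e : R) : `|x| < e -> -e < x /\ x < e.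
Proof. by rewrite ltr_norml => /andP. Qed.
Lemma absI (x e : R) : -e < x -> x < e -> `|x| < e.
Proof. by move=> h1 h2; rewrite ltr_norml h1 h2. Qed.

Definition close (e : R) (s p : seq T) := all2 (fun z w => d z w < e) s p.
Definition mclose e s p := exists2 s', perm_eq s' s & close e s' p.
Definition inI (u v t : R) := (u <= t) && (t <= v).
Definition mpath u v (A : R -> seq T) := forall t0, inI u v t0 -> forall e, 0 < e ->
  exists2 dl, 0 < dl & forall t, inI u v t -> `|t - t0| < dl -> mclose e (A t) (A t0).
Definition cont u v (b : R -> seq T) := forall t0, inI u v t0 -> forall e, 0 < e ->
  exists2 dl, 0 < dl & forall t, inI u v t -> `|t - t0| < dl -> close e (b t) (b t0).
Definition islift u v A b := (forall t, inI u v t -> perm_eq (b t) (A t)) /\ cont u v b.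
Definition full (p : seq T) := all (pred1 (head x0 p)) p.
Definition szn n u v (A : R -> seq T) := forall t, inI u v t -> size (A t) = n.

Lemma all2_nth (r : T -> T -> bool) s p i : all2 r s p -> (i < size s)%N ->
  r (nth x0 s i) (nth x0 p i).
Proof.
elim: s p i => [|x s IH] [|y p] [|i] //=; first by case/andP.
by case/andP=> _ h; apply: IH.
Qed.

Lemma all2_size (r : T -> T -> bool) s p : all2 r s p -> size s = size p.
Proof. by elim: s p => [|x s IH] [|y p] //= /andP[_ /IH ->]. Qed.

Lemma all2_map_idx (r : T -> T -> bool) (f g : nat -> T) (sg : seq nat) :
  (forall i, i \in sg -> r (f i) (g i)) -> all2 r (map f sg) (map g sg).
Proof.
elim: sg => [|i sg IH] //= h; rewrite h ?mem_head //= IH // => j hj.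
by apply: h; rewrite in_cons hj orbT.
Qed.

Lemma all2_impl (r r' : T -> T -> bool) s p : (forall x y, r x y -> r' x y) ->
  all2 r s p -> all2 r' s p.
Proof. by move=> h; elim: s p => [|x s IH] [|y p] //= /andP[/h -> /IH]. Qed.

Lemma close_refl e s : 0 < e -> close e s s.
Proof. by move=> e0; elim: s => //= x s ->; rewrite d_refl e0. Qed.

Lemma close_mono e e' s p : e <= e' -> close e s p -> close e' s p.
Proof. by move=> le; apply: all2_impl => x y h; apply: lt_le_trans le. Qed.

Lemma close_sym e s p : close e s p -> close e p s.
Proof. by elim: s p => [|x s IH] [|y p] //= /andP[h /IH ->]; rewrite d_sym h. Qed.

Lemma close_tri e1 e2 s p q : close e1 s p -> close e2 p q -> close (e1 + e2) s q.
Proof.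
elim: s p q => [|x s IH] [|y p] [|z q] //= /andP[h1 h2] /andP[h3 h4].
rewrite (IH _ _ h2 h4) andbT; apply: le_lt_trans (d_tri x y z) _.
by apply: ltrD.
Qed.

Lemma close_size e s p : close e s p -> size s = size p.
Proof. exact: all2_size. Qed.

Definition isperm (sg : seq nat) n := perm_eq sg (iota 0 n).
Definition papp (sg : seq nat) (s : seq T) := map (nth x0 s) sg.

Lemma papp_perm sg s : isperm sg (size s) -> perm_eq (papp sg s) s.
Proof. by move=> h; apply/(perm_iotaP x0); exists sg. Qed.

Lemma papp_size sg s : size (papp sg s) = size sg.
Proof. by rewrite size_map. Qed.

Lemma isperm_lt sg n i : isperm sg n -> i \in sg -> (i < n)%N.
Proof. by move=> h; rewrite (perm_mem h) mem_iota. Qed.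

Lemma papp_all2 (r : T -> T -> bool) sg s p : isperm sg (size s) -> all2 r s p ->
  all2 r (papp sg s) (papp sg p).
Proof.
move=> hs hr; apply: all2_map_idx => i hi; apply: all2_nth hr _.
exact: isperm_lt hs hi.
Qed.

Lemma align_ex p q : perm_eq p q -> exists sg, isperm sg (size q) /\ p = papp sg q.
Proof. by move/(perm_iotaP x0)=> [sg h1 h2]; exists sg. Qed.

Definition align p q : seq nat :=
  epsilon (inhabits [::]) (fun sg => isperm sg (size q) /\ p = papp sg q).

Lemma alignP p q : perm_eq p q -> isperm (align p q) (size q) /\ p = papp (align p q) q.
Proof. by move=> h; apply: (epsilon_spec (inhabits [::]) _ (align_ex h)). Qed.

End Core.


Section Core2.
Variable R : realType.
Variable T : eqType.
Variable x0 : T.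
Variable d : T -> T -> R.
Hypothesis d_ge0 : forall x y, 0 <= d x y.
Hypothesis d_sym : forall x y, d x y = d y x.
Hypothesis d_tri : forall x y z, d x z <= d x y + d y z.
Hypothesis d_refl : forall x, d x x = 0.
Hypothesis d_eq : forall x y, d x y = 0 -> x = y.

Local Notation close := (close d).
Local Notation mclose := (mclose d).
Local Notation mpath := (mpath d).
Local Notation cont := (cont d).
Local Notation islift := (islift d).
Local Notation papp := (papp x0).
Local Notation align := (align x0).

Lemma inI_sub (u v u' v' t : R) : u <= u' -> v' <= v -> inI u' v' t -> inI u v t.
Proof. by rewrite /inI => h1 h2 /andP[h3 h4]; apply/andP; split; lra. Qed.

Lemma mpath_sub u v u' v' A : u <= u' -> v' <= v -> mpath u v A -> mpath u' v' A.
Proof.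
move=> h1 h2 hA t0 ht0 e e0; have [dl dl0 H] := hA t0 (inI_sub h1 h2 ht0) e e0.
by exists dl => // t ht; apply: H; apply: inI_sub ht.
Qed.

Lemma cont_sub u v u' v' b : u <= u' -> v' <= v -> cont u v b -> cont u' v' b.
Proof.
move=> h1 h2 hA t0 ht0 e e0; have [dl dl0 H] := hA t0 (inI_sub h1 h2 ht0) e e0.
by exists dl => // t ht; apply: H; apply: inI_sub ht.
Qed.

Lemma islift_sub u v u' v' A b : u <= u' -> v' <= v -> islift u v A b -> islift u' v' A b.
Proof.
move=> h1 h2 [H1 H2]; split; last exact: cont_sub H2.
by move=> t ht; apply: H1; apply: inI_sub ht.
Qed.

Lemma inI_eq (s t : R) : inI s s t -> t = s.
Proof. by rewrite /inI => /andP[h1 h2]; apply/eqP; rewrite eq_le h1 h2. Qed.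

Lemma islift_pt (s : R) A : islift s s A A.
Proof.
split=> // t0 ht0 e e0; exists 1 => // t ht _.
by rewrite (inI_eq ht) (inI_eq ht0); apply: close_refl.
Qed.

Lemma cont_glue s m w f h : s <= m -> m <= w -> cont s m f -> cont m w h -> f m = h m ->
  cont s w (fun t => if t <= m then f t else h t).
Proof.
move=> sm mw cf ch fh t0 /andP[st0 t0w] e e0.
case: (ltgtP t0 m) => [t0m|mt0|t0m].
- have [dl dl0 H] := cf t0 (ltac:(apply/andP; split; lra)) e e0.
  exists (Num.min dl (m - t0)); first by rewrite lt_min dl0 subr_gt0.
  move=> t /andP[st tw]; rewrite lt_min => /andP[/[dup] ht1 /absP [h1 h2] /absP [h3 h4]].
  have tm : t <= m by lra.
  rewrite tm; apply: H => //; apply/andP; split; lra.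
- have [dl dl0 H] := ch t0 (ltac:(apply/andP; split; lra)) e e0.
  exists (Num.min dl (t0 - m)); first by rewrite lt_min dl0 subr_gt0.
  move=> t /andP[st tw]; rewrite lt_min => /andP[/[dup] ht1 /absP [h1 h2] /absP [h3 h4]].
  have tm : ~~ (t <= m) by rewrite -ltNge; lra.
  rewrite (negbTE tm); try rewrite leNgt mt0 /=; apply: H => //; apply/andP; split; lra.
- subst t0.
  have [dl1 dl10 H1] := cf m (ltac:(apply/andP; split; lra)) e e0.
  have [dl2 dl20 H2] := ch m (ltac:(apply/andP; split; lra)) e e0.
  exists (Num.min dl1 dl2); first by rewrite lt_min dl10 dl20.
  move=> t /andP[st tw]; rewrite lt_min => /andP[ht1 ht2]; cbv beta.
  case: ifP => tm.
  + by apply: H1 => //; apply/andP; split.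
  + rewrite fh; apply: H2 => //; apply/andP; split => //; move/negbT: tm; rewrite -ltNge; lra.
Qed.

Definition glue (f g : R -> seq T) (m : R) : R -> seq T :=
  fun t => if t <= m then f t else papp (align (f m) (g m)) (g t).

Lemma glue_lift n s m w A f g : s <= m -> m <= w -> szn n s w A ->
  islift s m A f -> islift m w A g -> islift s w A (glue f g m).
Proof.
move=> sm mw hsz [pf cf] [pg cg].
have mm : inI m w m by apply/andP; split.
have mm' : inI s m m by apply/andP; split.
have hfg : perm_eq (f m) (g m) by rewrite (permPr (pg m mm)) pf.
have [hs he] := alignP x0 hfg.
have szg : forall t, inI m w t -> size (g t) = size (g m).
  move=> t ht; rewrite (perm_size (pg t ht)) (perm_size (pg m mm)) !hsz //.
  + exact: inI_sub mm.
  + exact: inI_sub ht.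
split.
- move=> t /andP[st tw]; rewrite /glue; case: ifP => tm.
  + by apply: pf; apply/andP; split.
  + have ht : inI m w t by apply/andP; split => //; move/negbT: tm; rewrite -ltNge; lra.
    rewrite (permPl (papp_perm _ _)) ?(pg t ht) // szg //.
- apply: cont_glue => //.
  move=> t0 ht0 e e0; have [dl dl0 H] := cg t0 ht0 e e0; exists dl => // t ht htt.
  apply: papp_all2; last exact: H.
  by rewrite szg.
Qed.


Lemma close_nseq e s c : close e s (nseq (size s) c) = all (fun z => d z c < e) s.
Proof. by elim: s => //= z s ->. Qed.

Lemma close_nseq_mem e s k c z : close e s (nseq k c) -> z \in s -> d z c < e.
Proof.
move=> h; have := close_size h; rewrite size_nseq => hk; move: h.
by rewrite -hk close_nseq => /allP; apply.
Qed.

Lemma close_match e s p w : close e s p -> w \in p -> exists2 z, z \in s & d z w < e.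
Proof.
elim: s p => [|z s IH] [|y p] //= /andP[h1 h2]; rewrite in_cons => /orP[/eqP->|hw].
- by exists z; rewrite ?mem_head.
- by have [z' hz' h'] := IH _ h2 hw; exists z' => //; rewrite in_cons hz' orbT.
Qed.

Lemma full_nseq p : full x0 p -> p = nseq (size p) (head x0 p).
Proof. by move/all_pred1P. Qed.

Lemma full_cont u v A b t0 : mpath u v A -> inI u v t0 -> full x0 (A t0) ->
  (forall t, inI u v t -> perm_eq (b t) (A t)) ->
  forall e, 0 < e -> exists2 dl, 0 < dl &
    forall t, inI u v t -> `|t - t0| < dl -> close e (b t) (b t0).
Proof.
move=> hA ht0 hf hb e e0; have [dl dl0 H] := hA t0 ht0 e e0; exists dl => // t ht htt.
have [s' hs' hc] := H t ht htt.
set c := head x0 (A t0); have hp := full_nseq hf; rewrite hp in hc.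
have hb0 : b t0 = nseq (size (b t0)) c.
  apply/all_pred1P/allP => z hz; move: hz; rewrite (perm_mem (hb t0 ht0)) hp.
  by rewrite mem_nseq => /andP[].
have szeq : size (b t) = size (b t0).
  rewrite (perm_size (hb t ht)) (perm_size (hb t0 ht0)) -(perm_size hs').
  by rewrite (close_size hc) size_nseq.
rewrite hb0 -szeq close_nseq; apply/allP => z hz.
apply: (close_nseq_mem hc); rewrite (perm_mem hs') -(perm_mem (hb t ht)) //.
Qed.

Lemma nf_nbhd u v A t0 : mpath u v A -> inI u v t0 -> ~~ full x0 (A t0) ->
  exists2 dl, 0 < dl & forall t, inI u v t -> `|t - t0| < dl -> ~~ full x0 (A t).
Proof.
move=> hA ht0; rewrite /full; set p := A t0; set x := head x0 p.
case/allPn=> y yp /= yx.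
have xp : x \in p by rewrite /x; case: (p) yp => //= *; rewrite mem_head.
have dxy : 0 < d x y.
  by rewrite lt_neqAle d_ge0 andbT eq_sym; apply/eqP => /d_eq h; rewrite h eqxx in yx.
have [dl dl0 H] := hA t0 ht0 (d x y / 2) ltac:(by rewrite divr_gt0).
exists dl => // t ht htt; apply/negP => hf.
have [s' hs' hc] := H t ht htt.
have hn := full_nseq hf; set c := head x0 (A t) in hn.
have allc : forall z, z \in s' -> z = c.
  by move=> z; rewrite (perm_mem hs') hn mem_nseq => /andP[_ /eqP].
have [z1 hz1 h1] := close_match hc xp; have [z2 hz2 h2] := close_match hc yp.
rewrite (allc _ hz1) in h1; rewrite (allc _ hz2) in h2.
have h3 := ltrD h1 h2; have h4 := d_tri x c y; rewrite [d x c]d_sym in h4.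
clear -h3 h4; lra.
Qed.

Lemma inI_neg (u v t : R) : inI (-v) (-u) t = inI u v (-t).
Proof. by rewrite /inI lerNl lerNr andbC. Qed.

Lemma mpath_neg (u v : R) A : mpath u v A -> mpath (-v) (-u) (fun t => A (-t)).
Proof.
move=> hA t0; rewrite inI_neg => ht0 e e0; have [dl dl0 H] := hA _ ht0 e e0.
exists dl => // t; rewrite inI_neg => ht htt; apply: H => //.
by rewrite -opprD normrN.
Qed.

Lemma cont_neg (u v : R) b : cont (-v) (-u) b -> cont u v (fun t => b (-t)).
Proof.
move=> hA t0 ht0 e e0; have [dl dl0 H] := hA (-t0) ltac:(by rewrite inI_neg opprK) e e0.
exists dl => // t ht htt; apply: H; first by rewrite inI_neg opprK.
by rewrite -opprD normrN.
Qed.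

Lemma islift_neg (u v : R) A b : islift (-v) (-u) (fun t => A (-t)) b -> islift u v A (fun t => b (-t)).
Proof.
move=> [h1 h2]; split; last exact: cont_neg.
by move=> t ht; have := h1 (-t); rewrite inI_neg opprK => /(_ ht).
Qed.

Lemma szn_neg n (u v : R) (A : R -> seq T) : szn n u v A -> szn n (-v) (-u) (fun t => A (-t)).
Proof. by move=> h t; rewrite inI_neg; apply: h. Qed.

End Core2.

Module SupAux.
Import classical_sets.


Lemma sup_ex (R : realType) (E : R -> Prop) (a M : R) : E a -> (forall x, E x -> x <= M) ->
  exists s : R, [/\ forall x, E x -> x <= s,
     forall e, 0 < e -> exists2 x, E x & s - e < x & s <= M].
Proof.
move=> Ea EM.
have hs : has_sup E by split; [exists a | exists M => x /EM].
exists (sup E); split.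
- by move=> x Ex; apply: sup_upper_bound.
- by move=> e e0; apply: sup_adherent.
- apply/ler_addgt0Pr => e e0; have [x Ex h] := sup_adherent e0 hs.
  have := EM _ Ex; lra.
Qed.


End SupAux.
Import SupAux.

Section MaxMin.
Variable R : realType.

Definition closedP (u v : R) (P : R -> Prop) := forall t, inI u v t -> ~ P t ->
  exists2 dl, 0 < dl & forall s, inI u v s -> `|s - t| < dl -> ~ P s.

Lemma max_ex (P : R -> Prop) (u v z : R) : inI u v z -> P z -> closedP u v P ->
  exists g, [/\ inI u v g, P g & forall s, inI u v s -> P s -> s <= g].
Proof.
move=> hz Pz hc.
have [g [ub adh gM]] := @sup_ex R (fun s => inI u v s /\ P s) z v (conj hz Pz)
  (fun x hx => proj2 (andP (proj1 hx))).
have hg : inI u v g.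
  have h2 := ub _ (conj hz Pz); case/andP: (hz) => h1 _.
  by apply/andP; split => //; apply: le_trans h1 h2.
exists g; split => //; last by move=> s hs Ps; apply: ub.
apply: NNPP => nP; have [dl dl0 H] := hc g hg nP.
have [x [hx Px] hxg] := adh dl dl0; apply: (H x hx) => //.
have := ub x (conj hx Px); move=> h; apply: absI; clear -h hxg; lra.
Qed.

Lemma closedP_neg u v P : closedP u v P -> closedP (-v) (-u) (fun t => P (-t)).
Proof.
move=> hc t; rewrite inI_neg => ht nP; have [dl dl0 H] := hc _ ht nP.
exists dl => // s; rewrite inI_neg => hs hst; apply: H => //.
by rewrite -opprD normrN.
Qed.

Lemma min_ex (P : R -> Prop) (u v z : R) : inI u v z -> P z -> closedP u v P ->
  exists g, [/\ inI u v g, P g & forall s, inI u v s -> P s -> g <= s].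
Proof.
move=> hz Pz hc.
have [g [hg Pg H]] := @max_ex (fun t => P (-t)) (-v) (-u) (-z)
  ltac:(by rewrite inI_neg opprK) ltac:(by rewrite /= opprK) (closedP_neg hc).
exists (-g); split => //; first by rewrite -inI_neg.
move=> s hs Ps; rewrite lerNl; apply: H; first by rewrite inI_neg opprK.
by rewrite /= opprK.
Qed.
End MaxMin.


Section Local.
Variable R : realType.
Variable T : eqType.
Variable x0 : T.
Variable d : T -> T -> R.
Hypothesis d_ge0 : forall x y, 0 <= d x y.
Hypothesis d_sym : forall x y, d x y = d y x.
Hypothesis d_tri : forall x y z, d x z <= d x y + d y z.
Hypothesis d_refl : forall x, d x x = 0.
Hypothesis d_eq : forall x y, d x y = 0 -> x = y.

Local Notation close := (close d).
Local Notation mclose := (mclose d).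
Local Notation mpath := (mpath d).
Local Notation cont := (cont d).
Local Notation islift := (islift d).
Local Notation full := (full x0).

Definition LiftP n := forall (u v : R) (A : R -> seq T), u <= v -> szn n u v A -> mpath u v A ->
  exists b, islift u v A b.

Lemma sep_ex (p : seq T) x : exists2 r : R, 0 < r & forall w, w \in p -> w != x -> r <= d w x.
Proof.
elim: p => [|w p [r r0 IH]]; first by exists 1.
have [wx|wx] := eqVneq w x.
- exists r => // w'; rewrite in_cons => /orP[/eqP->|]; first by rewrite wx eqxx.
  exact: IH.
- have dw : 0 < d w x.
    by rewrite lt_neqAle d_ge0 andbT eq_sym; apply/eqP => /d_eq h; rewrite h eqxx in wx.
  exists (Num.min r (d w x)); first by rewrite lt_min r0 dw.
  move=> w'; rewrite in_cons => /orP[/eqP hw|hw hw'].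
  + by move=> _; rewrite hw ge_min lexx orbT.
  + by rewrite ge_min IH.
Qed.

Lemma all2_filter (e : R) (P : pred T) s p : close e s p ->
  (forall z w, w \in p -> d z w < e -> P z = P w) -> close e (filter P s) (filter P p).
Proof.
elim: s p => [|z s IH] [|w p] //= /andP[h1 h2] hc.
have hzw := hc z w (mem_head _ _) h1.
have IH' : close e (filter P s) (filter P p).
  by apply: IH => // z' w' hw'; apply: hc; rewrite in_cons hw' orbT.
rewrite /close /= hzw; case: (P w) => //=.
by rewrite h1.
Qed.

Lemma close_cat e s1 s2 p1 p2 : close e s1 p1 -> close e s2 p2 -> close e (s1 ++ s2) (p1 ++ p2).
Proof. by elim: s1 p1 => [|z s IH] [|w p] //= /andP[-> /IH h] /h. Qed.

Lemma close_match_l e s p z : close e s p -> z \in s -> exists2 w, w \in p & d z w < e.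
Proof.
move=> /(close_sym d_sym) h hz; have [w hw hd] := close_match h hz.
by exists w => //; rewrite d_sym.
Qed.


Lemma filter_path (u v t0 r : R) A (P : pred T) : 0 < r -> mpath u v A -> inI u v t0 ->
  (forall t, inI u v t -> mclose r (A t) (A t0)) ->
  (forall t, inI u v t -> forall z w, w \in A t -> d z w < r -> P z = P w) ->
  szn (count P (A t0)) u v (fun t => filter P (A t)) /\ mpath u v (fun t => filter P (A t)).
Proof.
move=> r0 hA ht0 hm hc; split.
- move=> t ht; have [s' hs' hcl] := hm t ht.
  rewrite -(perm_size (perm_filter P hs')) -size_filter.
  exact: close_size (all2_filter hcl (hc t0 ht0)).
- move=> t1 ht1 e e0; have [dl dl0 H] := hA t1 ht1 (Num.min e r) ltac:(by rewrite lt_min e0 r0).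
  exists dl => // t ht htt; have [s' hs' hcl] := H t ht htt.
  exists (filter P s'); first exact: perm_filter.
  apply: (close_mono (e := Num.min e r)); first by rewrite ge_min lexx.
  apply: all2_filter hcl _ => z w hw hzw; apply: (hc t1 ht1 z w hw).
  by apply: lt_le_trans hzw _; rewrite ge_min lexx orbT.
Qed.

Lemma local_split n (u v t0 : R) A : (forall m, (m < n)%N -> LiftP m) ->
  szn n u v A -> mpath u v A -> inI u v t0 -> ~~ full (A t0) ->
  exists2 dl : R, 0 < dl &
    exists b, islift (Num.max u (t0 - dl)) (Num.min v (t0 + dl)) A b.
Proof.
move=> IH hsz hA ht0 hnf.
set p := A t0; set x := head x0 p.
have [y yp yx] : exists2 y, y \in p & y != x by case/allPn: hnf => y yp /= yx; exists y.
have xp : x \in p by rewrite /x; case: (p) yp => //= *; rewrite mem_head.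
have [r0 r00 hr0] := sep_ex p x.
set r := r0 / 4.
have rpos : 0 < r by rewrite divr_gt0.
have [dl0 dl00 H0] := hA t0 ht0 r rpos.
exists (dl0 / 2); first by rewrite divr_gt0.
set u' := Num.max u (t0 - dl0 / 2); set v' := Num.min v (t0 + dl0 / 2).
have inK : forall t, inI u' v' t -> inI u v t /\ `|t - t0| < dl0.
  move=> t /andP[]; rewrite ge_max le_min => /andP[h1 h2] /andP[h3 h4].
  split; first by apply/andP.
  by apply: absI; lra.
have ht0K : inI u' v' t0.
  case/andP: ht0 => h1 h2.
  have h3 : t0 - dl0 / 2 <= t0 by lra.
  have h4 : t0 <= t0 + dl0 / 2 by lra.
  by rewrite /inI ge_max le_min h1 h2 h3 h4.
have uv' : u' <= v' by case/andP: ht0K => h1 h2; apply: le_trans h1 h2.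
have dich : forall t, inI u' v' t -> forall w, w \in A t -> (d w x < r) || (3 * r < d w x).
  move=> t ht w hw; have [htJ htt] := inK t ht; have [s' hs' hc] := H0 t htJ htt.
  have ws' : w \in s' by rewrite (perm_mem hs').
  have [w' w'p hww'] := close_match_l hc ws'.
  have [e1|ne1] := eqVneq w' x; first by rewrite -e1 hww'.
  have h1 := hr0 w' w'p ne1; have h2 := d_tri w' w x; rewrite d_sym in hww'.
  apply/orP; right; rewrite /r in hww' *; lra.
pose Q : pred T := fun z => d z x < 2 * r.
have compat : forall t, inI u' v' t -> forall z w, w \in A t -> d z w < r -> Q z = Q w.
  move=> t ht z w hw hzw; rewrite /Q; case/orP: (dich t ht w hw) => hwx.
  + have := d_tri z w x => h; have -> : d w x < 2 * r by lra.
    by apply/idP; lra.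
  + have := d_tri w z x => h; rewrite d_sym in hzw.
    have -> : d w x < 2 * r = false by apply/negbTE; rewrite -leNgt; lra.
    by apply/negbTE; rewrite -leNgt; lra.
have compatC : forall t, inI u' v' t -> forall z w, w \in A t -> d z w < r ->
    (predC Q) z = (predC Q) w by move=> t ht z w hw hzw /=; rewrite (compat t ht z w hw hzw).
have hm : forall t, inI u' v' t -> mclose r (A t) (A t0).
  by move=> t ht; have [h1 h2] := inK t ht; apply: H0.
have hA' : mpath u' v' A.
  apply: mpath_sub hA; first by rewrite le_max lexx.
  by rewrite ge_min lexx.
have [sz1 mp1] := filter_path rpos hA' ht0K hm compat.
have [sz2 mp2] := filter_path rpos hA' ht0K hm compatC.
have cnt := count_predC Q p; rewrite -/p in sz1 sz2.
have c1 : (0 < count Q p)%N by rewrite -has_count; apply/hasP; exists x => //; rewrite /Q d_refl; lra.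
have c2 : (0 < count (predC Q) p)%N.
  rewrite -has_count; apply/hasP; exists y => //=; rewrite /Q -leNgt.
  have := hr0 y yp yx; rewrite /r; lra.
have szp : size p = n by apply: hsz.
have [b1 [pb1 cb1]] := IH (count Q p) (ltac:(lia)) u' v' _ uv' sz1 mp1.
have [b2 [pb2 cb2]] := IH (count (predC Q) p) (ltac:(lia)) u' v' _ uv' sz2 mp2.
exists (fun t => b1 t ++ b2 t); split.
- move=> t ht; rewrite perm_sym -(perm_filterC Q) perm_sym.
  by apply: perm_cat; [apply: pb1 | apply: pb2].
- move=> t1 ht1 e e0; have [e1 e10 H1] := cb1 t1 ht1 e e0; have [e2 e20 H2] := cb2 t1 ht1 e e0.
  exists (Num.min e1 e2); first by rewrite lt_min e10 e20.
  move=> t ht; rewrite lt_min => /andP[h1 h2]; apply: close_cat; [exact: H1 | exact: H2].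
Qed.

End Local.


Section CG.
Variable R : realType.
Variable T : eqType.
Variable x0 : T.
Variable d : T -> T -> R.
Hypothesis d_ge0 : forall x y, 0 <= d x y.
Hypothesis d_sym : forall x y, d x y = d y x.
Hypothesis d_tri : forall x y z, d x z <= d x y + d y z.
Hypothesis d_refl : forall x, d x x = 0.
Hypothesis d_eq : forall x y, d x y = 0 -> x = y.

Local Notation close := (close d).
Local Notation mpath := (mpath d).
Local Notation cont := (cont d).
Local Notation islift := (islift d).
Local Notation full := (full x0).
Local Notation glue := (glue x0).

Definition tau (s t : R) (k : nat) := t - (t - s) / (k.+1)%:R.

Lemma tau0 s t : tau s t 0 = s.
Proof. by rewrite /tau divr1 opprB addrC subrK. Qed.

Lemma tau_lt s t k : s < t -> tau s t k < t.
Proof.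
move=> st; rewrite /tau ltrBlDr ltrDl; apply: divr_gt0; first by rewrite subr_gt0.
by rewrite ltr0n.
Qed.

Lemma tau_mono s t k j : s < t -> (k <= j)%N -> tau s t k <= tau s t j.
Proof.
move=> st kj; rewrite /tau lerD2l lerN2; apply: ler_wpM2l; first by rewrite subr_ge0 ltW.
by rewrite lef_pV2 ?posrE ?ltr0n // ler_nat.
Qed.

Lemma tau_ltS s t k : s < t -> tau s t k < tau s t k.+1.
Proof.
move=> st; rewrite /tau ltrD2l ltrN2 ltr_pM2l ?subr_gt0 //.
by rewrite ltf_pV2 ?posrE ?ltr0n // ltr_nat.
Qed.

Lemma tau_ge s t k : s < t -> s <= tau s t k.
Proof. by move=> st; rewrite -{1}(tau0 s t); apply: tau_mono. Qed.

Definition Kidx (s t x : R) := Num.truncn ((t - s) / (t - x)).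

Lemma Kidx_spec s t x : s < t -> s <= x -> x < t -> x <= tau s t (Kidx s t x).
Proof.
move=> st sx xt; rewrite /tau /Kidx.
have h := truncnS_gt ((t - s) / (t - x)).
set k := (Num.truncn _).+1%:R in h *.
have k0 : 0 < k by rewrite /k ltr0n.
have tx : 0 < t - x by rewrite subr_gt0.
rewrite lerBrDr -lerBrDl ler_pdivrMr // mulrC -ler_pdivrMr //.
exact: ltW.
Qed.


Definition piece (A : R -> seq T) s t k :=
  epsilon (inhabits A) (islift (tau s t k) (tau s t k.+1) A).

Fixpoint beta (A : R -> seq T) s t k : R -> seq T :=
  match k with 0 => A | k'.+1 => glue (beta A s t k') (piece A s t k') (tau s t k') end.

Definition blim (A : R -> seq T) s t x :=
  if x < t then beta A s t (Kidx s t x) x else A x.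

Lemma beta_compat A s t k j x : s < t -> (k <= j)%N -> x <= tau s t k ->
  beta A s t j x = beta A s t k x.
Proof.
move=> st; elim: j => [|j IH]; first by rewrite leqn0 => /eqP->.
rewrite leq_eqVlt => /orP[/eqP->//|]; rewrite ltnS => kj xk /=.
rewrite /glue (le_trans xk (tau_mono st kj)); exact: IH.
Qed.

Lemma beta_eq A s t k j x : s < t -> x <= tau s t k -> x <= tau s t j ->
  beta A s t j x = beta A s t k x.
Proof.
move=> st xk xj; case: (leqP k j) => kj; first exact: beta_compat.
by symmetry; apply: beta_compat => //; apply: ltnW.
Qed.

Lemma cg_left n (s t : R) A : s < t -> szn n s t A -> mpath s t A -> full (A t) ->
  (forall y, s <= y -> y < t -> exists b, islift s y A b) -> exists b, islift s t A b.
Proof.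
move=> st hsz hA hf H.
have hpiece : forall k, islift (tau s t k) (tau s t k.+1) A (piece A s t k).
  move=> k; apply: (epsilon_spec (inhabits A) (islift (tau s t k) (tau s t k.+1) A)).
  have [b hb] := H (tau s t k.+1) (tau_ge k.+1 st) (tau_lt k.+1 st).
  by exists b; apply: islift_sub hb => //; apply: tau_ge.
have hbeta : forall k, islift s (tau s t k) A (beta A s t k).
  elim=> [|k IH]; first by rewrite tau0; apply: islift_pt.
  apply: (glue_lift x0 (n := n)) => //.
  - exact: tau_ge.
  - exact: ltW (tau_ltS k st).
  - by move=> x hx; apply: hsz; apply: inI_sub hx => //; apply: ltW (tau_lt _ st).
have hK : forall x, s <= x -> x < t -> x <= tau s t (Kidx s t x) by move=> x; apply: Kidx_spec.
exists (blim A s t); split.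
- move=> x /andP[sx xt]; rewrite /blim; case: ifP => // xt'.
  by case: (hbeta (Kidx s t x)) => hp _; apply: hp; rewrite /inI sx hK.
- move=> x0' /andP[sx0 x0t] e e0.
  have [lt0|eq0] : x0' < t \/ x0' = t.
    by case: (ltgtP x0' t) => h; [left|move: x0t; rewrite leNgt h|right].
  + set k := (Kidx s t x0').+1.
    have hx0k : x0' < tau s t k by apply: le_lt_trans (hK _ sx0 lt0) (tau_ltS _ st).
    have [_ cb] := hbeta k.
    have [dl dl0 Hd] := cb x0' (ltac:(by rewrite /inI sx0 ltW)) e e0.
    exists (Num.min dl (tau s t k - x0')); first by rewrite lt_min dl0 subr_gt0.
    move=> x /andP[sx xt]; rewrite lt_min => /andP[h1 /absP[_ h2]].
    have xk : x < tau s t k by lra.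
    have xt' : x < t by apply: lt_trans xk (tau_lt _ st).
    rewrite /blim xt' lt0 (beta_eq A st (ltW xk) (hK _ sx xt')).
    rewrite (beta_eq A st (ltW hx0k) (hK _ sx0 lt0)).
    by apply: Hd => //; rewrite /inI sx ltW.
  + subst x0'.
    have hp : forall x, inI s t x -> perm_eq (blim A s t x) (A x).
      move=> x /andP[sx xt]; rewrite /blim; case: ifP => // xt'.
      by case: (hbeta (Kidx s t x)) => hp _; apply: hp; rewrite /inI sx hK.
    have := full_cont hA (ltac:(by rewrite /inI ltW //=)) hf hp e0.
    by rewrite /blim ltxx.
Qed.

End CG.


Section Main.
Variable R : realType.
Variable T : eqType.
Variable x0 : T.
Variable d : T -> T -> R.
Hypothesis d_ge0 : forall x y, 0 <= d x y.
Hypothesis d_sym : forall x y, d x y = d y x.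
Hypothesis d_tri : forall x y z, d x z <= d x y + d y z.
Hypothesis d_refl : forall x, d x x = 0.
Hypothesis d_eq : forall x y, d x y = 0 -> x = y.

Local Notation close := (close d).
Local Notation mpath := (mpath d).
Local Notation cont := (cont d).
Local Notation islift := (islift d).
Local Notation full := (full x0).
Local Notation glue := (glue x0).
Local Notation LiftP := (LiftP d).

Lemma szn_sub n (u v u' v' : R) (A : R -> seq T) : u <= u' -> v' <= v -> szn n u v A -> szn n u' v' A.
Proof. by move=> h1 h2 h t ht; apply: h; apply: inI_sub ht. Qed.

Lemma nofull_lift n (s t : R) A : (forall m, (m < n)%N -> LiftP m) -> s <= t ->
  szn n s t A -> mpath s t A -> (forall x, inI s t x -> ~~ full (A x)) ->
  exists b, islift s t A b.
Proof.
move=> IH st hsz hA hnf.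
pose E := fun y => inI s t y /\ exists b, islift s y A b.
have Es : E s by split; [rewrite /inI lexx st | exists A; apply: islift_pt].
have [S [ub adh SM]] := @sup_ex R E s t Es (fun y hy => proj2 (andP (proj1 hy))).
have sS : s <= S by apply: ub.
have hS : inI s t S by rewrite /inI sS SM.
have [dl dl0 [b' hb']] := local_split (x0:=x0) d_ge0 d_sym d_tri d_refl d_eq IH hsz hA hS (hnf S hS).
have [y [hy [b hb]] hyS] := adh dl dl0.
have yS : y <= S by apply: ub; split => //; exists b.
set w := Num.min t (S + dl / 2).
move: (hy); rewrite /inI => /andP[sy yt].
have h1 : y <= S + dl / 2 by lra.
have yw : y <= w by rewrite le_min yt h1.
have hb'' : islift y w A b'.
  have h2 : S - dl <= y by lra.
  have h3 : S + dl / 2 <= S + dl by lra.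
  apply: islift_sub hb'; first by rewrite ge_max sy h2.
  by rewrite le_min !ge_min lexx h3 orbT.
have wt : w <= t by rewrite ge_min lexx.
have hg := glue_lift x0 sy yw (szn_sub (lexx s) wt hsz) hb hb''.
have sw : s <= w by apply: le_trans sy yw.
have wS : w <= S by apply: ub; split; [rewrite /inI sw wt | exists (glue b b' y)].
have tw : t <= S + dl / 2.
  case: (leP t (S + dl / 2)) => // h.
  have : w = S + dl / 2 by rewrite /w; apply/min_idPr; apply: ltW.
  move=> ew; rewrite ew in wS; lra.
have -> : t = w by apply/eqP; rewrite eq_le wt le_min lexx tw.
by exists (glue b b' y).
Qed.


Lemma islift_neg2 (u v : R) A b : islift u v A b ->
  islift (-v) (-u) (fun t => A (-t)) (fun t => b (-t)).
Proof.
move=> [h1 h2]; split; first by move=> t; rewrite inI_neg; apply: h1.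
move=> t0; rewrite inI_neg => ht0 e e0; have [dl dl0 H] := h2 _ ht0 e e0.
exists dl => // t; rewrite inI_neg => ht htt; apply: H => //.
by rewrite -opprD normrN.
Qed.

Lemma cg_right n (s t : R) A : s < t -> szn n s t A -> mpath s t A -> full (A s) ->
  (forall y, s < y -> y <= t -> exists b, islift y t A b) -> exists b, islift s t A b.
Proof.
move=> st hsz hA hf H.
have H' : forall y, -t <= y -> y < -s -> exists b, islift (-t) y (fun x => A (-x)) b.
  move=> y h1 h2; have [b hb] := H (-y) (ltac:(by rewrite ltrNr)) (ltac:(by rewrite lerNl)).
  exists (fun x => b (-x)); have := islift_neg2 hb; by rewrite opprK.
have st' : -t < -s by rewrite ltrN2.
have hf' : full ((fun x => A (-x)) (-s)) by rewrite /= opprK.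
have [b hb] := cg_left (x0:=x0) d_refl st' (szn_neg hsz) (mpath_neg hA) hf' H'.
by exists (fun x => b (-x)); apply: islift_neg.
Qed.

Lemma gap_lift n (g1 g2 : R) A : (forall m, (m < n)%N -> LiftP m) -> g1 < g2 ->
  szn n g1 g2 A -> mpath g1 g2 A -> full (A g1) -> full (A g2) ->
  (forall x, g1 < x -> x < g2 -> ~~ full (A x)) -> exists b, islift g1 g2 A b.
Proof.
move=> IH g12 hsz hA hf1 hf2 hnf.
set m := (g1 + g2) / 2.
have g1m : g1 < m by rewrite /m; lra.
have mg2 : m < g2 by rewrite /m; lra.
have [b1 hb1] : exists b, islift g1 m A b.
  apply: (cg_right (n:=n)) => //.
  - exact: szn_sub (lexx _) (ltW mg2) hsz.
  - exact: mpath_sub (lexx _) (ltW mg2) hA.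
  - move=> y g1y ym; apply: (nofull_lift (n:=n)) => //.
    + exact: szn_sub (ltW g1y) (ltW mg2) hsz.
    + exact: mpath_sub (ltW g1y) (ltW mg2) hA.
    + move=> x /andP[h1 h2]; apply: hnf; lra.
have [b2 hb2] : exists b, islift m g2 A b.
  apply: (cg_left (x0:=x0) (n:=n) d_refl) => //.
  - exact: szn_sub (ltW g1m) (lexx _) hsz.
  - exact: mpath_sub (ltW g1m) (lexx _) hA.
  - move=> y my yg2; apply: (nofull_lift (n:=n)) => //.
    + exact: szn_sub (ltW g1m) (ltW yg2) hsz.
    + exact: mpath_sub (ltW g1m) (ltW yg2) hA.
    + move=> x /andP[h1 h2]; apply: hnf; lra.
exists (glue b1 b2 m); exact: glue_lift (ltW g1m) (ltW mg2) hsz hb1 hb2.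
Qed.


Lemma closedP_sub (u v u' v' : R) (P : R -> Prop) : u <= u' -> v' <= v ->
  closedP u v P -> closedP u' v' P.
Proof.
move=> h1 h2 hc t ht nP; have [dl dl0 H] := hc t (inI_sub h1 h2 ht) nP.
by exists dl => // s hs; apply: H; apply: inI_sub hs.
Qed.

Lemma full_closed (u v : R) A : mpath u v A -> closedP u v (fun t => full (A t)).
Proof.
move=> hA t ht nf; have nf' : ~~ full (A t) by apply/negP.
have [dl dl0 H] := nf_nbhd d_ge0 d_sym d_tri d_eq hA ht nf'.
by exists dl => // s hs hst; apply/negP; apply: H.
Qed.

Lemma full_full n (z1 z2 : R) A : (forall m, (m < n)%N -> LiftP m) -> z1 <= z2 ->
  szn n z1 z2 A -> mpath z1 z2 A -> full (A z1) -> full (A z2) -> exists b, islift z1 z2 A b.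
Proof.
move=> IH z12 hsz hA hf1 hf2.
have hcl := full_closed hA.
pose G1 t g := inI z1 t g /\ full (A g) /\ forall s, inI z1 t s -> full (A s) -> s <= g.
pose G2 t g := inI t z2 g /\ full (A g) /\ forall s, inI t z2 s -> full (A s) -> g <= s.
pose g1 t := epsilon (inhabits 0) (G1 t).
pose g2 t := epsilon (inhabits 0) (G2 t).
have hg1 : forall t, inI z1 z2 t -> G1 t (g1 t).
  move=> t /andP[h1 h2]; apply: epsilon_spec.
  have [g [hg fg H]] := max_ex (P := fun s => full (A s)) (u:=z1) (v:=t) (z:=z1)
     (ltac:(by rewrite /inI lexx h1)) hf1 (closedP_sub (lexx _) h2 hcl).
  by exists g.
have hg2 : forall t, inI z1 z2 t -> G2 t (g2 t).
  move=> t /andP[h1 h2]; apply: epsilon_spec.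
  have [g [hg fg H]] := min_ex (P := fun s => full (A s)) (u:=t) (v:=z2) (z:=z2)
     (ltac:(by rewrite /inI lexx h2)) hf2 (closedP_sub h1 (lexx _) hcl).
  by exists g.
pose L x y := epsilon (inhabits A) (islift x y A).
pose b t := if full (A t) then A t else L (g1 t) (g2 t) t.
have gapP : forall t, inI z1 z2 t -> ~~ full (A t) ->
    [/\ g1 t < t, t < g2 t & islift (g1 t) (g2 t) A (L (g1 t) (g2 t))].
  move=> t ht nft; have [/andP[a1 a2] [fa ma]] := hg1 t ht.
  have [/andP[c1 c2] [fc mc]] := hg2 t ht.
  case/andP: (ht) => t1 t2.
  have lt1 : g1 t < t by rewrite lt_neqAle a2 andbT; apply/eqP => e; rewrite e in fa; rewrite fa in nft.
  have lt2 : t < g2 t by rewrite lt_neqAle c1 andbT; apply/eqP => e; rewrite -e in fc; rewrite fc in nft.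
  split => //; apply: epsilon_spec; apply: (gap_lift (n:=n)) => //.
  - by apply: lt_trans lt1 lt2.
  - exact: szn_sub a1 c2 hsz.
  - exact: mpath_sub a1 c2 hA.
  - move=> x h1 h2; apply/negP => fx.
    case: (leP x t) => xt.
    + have := ma x (ltac:(rewrite /inI xt andbT; apply: le_trans a1 (ltW h1))) fx; lra.
    + have := mc x (ltac:(rewrite /inI (ltW xt) /=; apply: le_trans (ltW h2) c2)) fx; lra.
have hp : forall t, inI z1 z2 t -> perm_eq (b t) (A t).
  move=> t ht; rewrite /b; case: ifP => // /negbT nft.
  have [l1 l2 [hl _]] := gapP t ht nft; apply: hl; rewrite /inI !ltW //.
exists b; split => // t0 ht0 e e0.
case: (boolP (full (A t0))) => ft0.
  exact: full_cont hA ht0 ft0 hp e e0.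
have [dl0 dl00 Hn] := nf_nbhd d_ge0 d_sym d_tri d_eq hA ht0 ft0.
have [l1 l2 [_ hc]] := gapP t0 ht0 ft0.
have [dl1 dl10 HL] := hc t0 (ltac:(by rewrite /inI !ltW)) e e0.
have hfar : forall g, inI z1 z2 g -> full (A g) -> g <= t0 - dl0 \/ t0 + dl0 <= g.
  move=> g hg fg; apply: NNPP => hn; have := Hn g hg; rewrite fg /= => H.
  suff : `|g - t0| < dl0 by move/H.
  apply: absI.
  - case: (leP (t0 + dl0) g) => h; first by exfalso; apply: hn; right.
    have : ~ (g <= t0 - dl0) by move=> h'; apply: hn; left.
    by move/negP; rewrite -ltNge => h'; lra.
  - case: (leP (t0 + dl0) g) => h; first by exfalso; apply: hn; right.
    lra.
have [/andP[a1 a2] [fa ma]] := hg1 t0 ht0.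
have [/andP[c1 c2] [fc mc]] := hg2 t0 ht0.
have ga : g1 t0 <= t0 - dl0.
  case: (hfar (g1 t0) (ltac:(rewrite /inI a1 /=; apply: le_trans a2 (proj2 (andP ht0)))) fa) => //.
  lra.
have gc : t0 + dl0 <= g2 t0.
  case: (hfar (g2 t0) (ltac:(rewrite /inI c2 andbT; apply: le_trans (proj1 (andP ht0)) c1)) fc) => //.
  lra.
exists (Num.min dl0 dl1); first by rewrite lt_min dl00 dl10.
move=> t ht; rewrite lt_min => /andP[/[dup] htd0 /absP[h1 h2] htd1].
have nft := Hn t ht htd0.
have [/andP[a1' a2'] [fa' ma']] := hg1 t ht.
have [/andP[c1' c2'] [fc' mc']] := hg2 t ht.
case/andP: (ht) => t1 t2; case/andP: (ht0) => t01 t02.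
have e1 : g1 t = g1 t0.
  have i1 : g1 t0 <= g1 t by apply: ma' => //; rewrite /inI a1 /=; lra.
  have i2 : g1 t <= g1 t0.
    apply: ma => //; rewrite /inI a1' /=.
    case: (hfar (g1 t) (ltac:(rewrite /inI a1' /=; lra)) fa') => h; lra.
  by apply/eqP; rewrite eq_le i1 i2.
have e2 : g2 t = g2 t0.
  have i1 : g2 t <= g2 t0 by apply: mc' => //; rewrite /inI c2 andbT; lra.
  have i2 : g2 t0 <= g2 t.
    apply: mc => //; rewrite /inI c2' andbT.
    case: (hfar (g2 t) (ltac:(rewrite /inI c2' andbT; lra)) fc') => h; lra.
  by apply/eqP; rewrite eq_le i1 i2.
rewrite /b (negbTE nft) (negbTE ft0) e1 e2; apply: HL => //.
rewrite /inI; apply/andP; split; lra.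
Qed.

Lemma lift_all n : LiftP n.
Proof.
elim/ltn_ind: n => n IH u v A uv hsz hA.
case: (classic (exists z, inI u v z /\ full (A z))) => [[z [hz fz]] | nz]; last first.
  apply: (nofull_lift (n:=n)) => // x hx; apply/negP => fx; apply: nz; by exists x.
have hcl := full_closed hA.
have [z1 [hz1 f1 min1]] := min_ex hz fz hcl.
have [z2 [hz2 f2 max2]] := max_ex hz fz hcl.
have z12 : z1 <= z2 by apply: max2.
case/andP: (hz1) => uz1 z1v; case/andP: (hz2) => uz2 z2v.
have [b1 hb1] : exists b, islift u z1 A b.
  case: (ltgtP u z1) => h; last by rewrite -h; exists A; apply: islift_pt.
    apply: (cg_left (x0:=x0) (n:=n) d_refl) => //.
    - exact: szn_sub (lexx _) z1v hsz.
    - exact: mpath_sub (lexx _) z1v hA.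
    - move=> y uy yz1; apply: (nofull_lift (n:=n)) => //.
      + exact: szn_sub (lexx _) (ltW (lt_le_trans yz1 z1v)) hsz.
      + exact: mpath_sub (lexx _) (ltW (lt_le_trans yz1 z1v)) hA.
      + move=> x /andP[h1 h2]; apply/negP => fx.
        have := min1 x (ltac:(rewrite /inI h1 /=; lra)) fx; lra.
  by exfalso; move: uz1; rewrite leNgt h.
have [b3 hb3] : exists b, islift z2 v A b.
  case: (ltgtP z2 v) => h; last by rewrite -h; exists A; apply: islift_pt.
    apply: (cg_right (n:=n)) => //.
    - exact: szn_sub uz2 (lexx _) hsz.
    - exact: mpath_sub uz2 (lexx _) hA.
    - move=> y z2y yv; apply: (nofull_lift (n:=n)) => //.
      + exact: szn_sub (ltW (le_lt_trans uz2 z2y)) (lexx _) hsz.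
      + exact: mpath_sub (ltW (le_lt_trans uz2 z2y)) (lexx _) hA.
      + move=> x /andP[h1 h2]; apply/negP => fx.
        have := max2 x (ltac:(rewrite /inI h2 andbT; lra)) fx; lra.
  by exfalso; move: z2v; rewrite leNgt h.
have [b2 hb2] := full_full IH z12 (szn_sub uz1 z2v hsz) (mpath_sub uz1 z2v hA) f1 f2.
have h12 := glue_lift x0 uz1 z12 (szn_sub (lexx _) z2v hsz) hb1 hb2.
exists (glue (glue b1 b2 z1) b3 z2).
have := glue_lift x0 uz2 z2v hsz h12 hb3. done.
Qed.

End Main.


Section Cx.
Variable R : realType.
Local Notation C := R[i].

Lemma cd_ge0 (x y : C) : 0 <= cdist x y.
Proof. by rewrite /cdist /Normc.normc; case: (x - y) => a b; apply: sqrtr_ge0. Qed.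
Lemma cd_sym (x y : C) : cdist x y = cdist y x.
Proof. by rewrite /cdist -normcN opprB. Qed.
Lemma cd_tri (x y z : C) : cdist x z <= cdist x y + cdist y z.
Proof. by rewrite /cdist; apply: le_trans (le_normcD _ _); rewrite addrA subrK. Qed.
Lemma cd_refl (x : C) : cdist x x = 0.
Proof. by rewrite /cdist subrr Normc.normc0. Qed.
Lemma cd_eq (x y : C) : cdist x y = 0 -> x = y.
Proof. by rewrite /cdist => /Normc.eq0_normc /eqP; rewrite subr_eq0 => /eqP. Qed.
End Cx.

Section Exist.
Variable R : realType.
Local Notation C := R[i].
Local Notation d := (@cdist R).
Variable n : nat.

Definition vec (x : 'I_n -> C) : seq C := [seq x i | i <- enum 'I_n].

Lemma size_vec x : size (vec x) = n.
Proof. by rewrite size_map size_enum_ord. Qed.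

Lemma MultE (x y : 'I_n -> C) : (Mult x = Mult y) <-> perm_eq (vec x) (vec y).
Proof. by split => [h|h]; [apply/eq_seq_msetP | apply/eq_seq_msetP]. Qed.

Lemma all2_mapI (I : Type) (r : C -> C -> bool) (f g : I -> C) (s : seq I) :
  (forall i, r (f i) (g i)) -> all2 r (map f s) (map g s).
Proof. by move=> h; elim: s => //= i s ->; rewrite h. Qed.

Lemma close_slack (e : R) s p : close d e s p -> exists2 e', 0 < e' & close d (e - e') s p.
Proof.
elim: s p => [|z s IH] [|w p] //=; first by move=> _; exists 1.
case/andP=> h1 /IH [e2 e20 h2].
have e1 : 0 < e - d z w by rewrite subr_gt0.
exists (Num.min ((e - d z w) / 2) e2); first by rewrite lt_min e20 divr_gt0.
apply/andP; split.
- have : Num.min ((e - d z w) / 2) e2 <= (e - d z w) / 2 by rewrite ge_min lexx.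
  move=> hm'; lra.
- apply: close_mono h2; rewrite lerD2l lerN2 ge_min lexx orbT //.
Qed.

Lemma vec_nth (s : seq C) : size s = n -> vec (fun i => nth 0 s i) = s.
Proof.
move=> hs; rewrite /vec.
have -> : [seq nth 0 s i | i : 'I_n <- enum 'I_n] = map (nth 0 s) [seq val i | i : 'I_n <- enum 'I_n].
  by rewrite -map_comp.
rewrite val_enum_ord.
by rewrite -hs -/(mkseq _ _) mkseq_nth.
Qed.

Lemma nth_vec (x : 'I_n -> C) (i : 'I_n) : nth 0 (vec x) i = x i.
Proof. by rewrite /vec (nth_map i) ?size_enum_ord // nth_ord_enum. Qed.

End Exist.

Section Exist2.
Variable R : realType.
Local Notation C := R[i].
Local Notation d := (@cdist R).
Variable n : nat.
Local Notation vec := (@vec R n).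

Definition ys (a : R -> multiset C) t : 'I_n -> C :=
  epsilon (inhabits (fun _ => 0)) (fun x => Mult x = a t).
Definition Aof a t := vec (ys a t).

Lemma ys_spec a t : in_Multn n (a t) -> Mult (ys a t) = a t.
Proof. by move=> [x hx]; apply: (epsilon_spec (inhabits (fun _ => 0)) (fun x => Mult x = a t)); exists x. Qed.

Lemma path_mpath a : is_path_Multn n a -> mpath d 0 1 (Aof a).
Proof.
case=> hin hop t0 ht0 e e0.
set p := Aof a t0.
pose U := fun m : multiset C => exists s, seq_mset s = m /\ mclose d e s p.
have hU : openMultn n U.
  move=> x [s [hs [s' hs' hc]]].
  have [e' e'0 hc'] := close_slack hc.
  have hp : perm_eq s' (vec x) by apply: perm_trans hs' _; apply/eq_seq_msetP.
  have [hsg hsge] := alignP 0 hp.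
  exists e' => // y hy.
  have sz : size (vec y) = size (vec x) by rewrite !size_vec.
  exists (vec y); split => //.
  exists (papp 0 (align 0 s' (vec x)) (vec y)).
    by apply: papp_perm; rewrite sz.
  have h1 : close d e' (papp 0 (align 0 s' (vec x)) (vec y)) (papp 0 (align 0 s' (vec x)) (vec x)).
    apply: papp_all2; first by rewrite sz.
    exact: all2_mapI.
  rewrite -hsge in h1; have := close_tri (@cd_tri R) h1 hc'.
  by rewrite addrC subrK.
have hUa : U (a t0).
  exists p; split; first exact: ys_spec (hin t0 ht0).
  by exists p => //; apply: close_refl; [exact: (@cd_refl R) | exact: e0].
have [dl dl0 H] := hop U hU t0 ht0 hUa.
exists dl => // t ht htt; have [s [hs [s' hs' hc]]] := H t ht htt.
exists s' => //; apply: perm_trans hs' _; apply/eq_seq_msetP.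
by rewrite hs /Aof -(ys_spec (hin t ht)).
Qed.

End Exist2.

Section Exist3.
Variable R : realType.
Local Notation C := R[i].
Local Notation d := (@cdist R).
Variable n : nat.
Local Notation vec := (@vec R n).

Lemma existence (a : R -> multiset C) (x0 : 'I_n -> C) : is_path_Multn n a -> Mult x0 = a 0 ->
  exists b : R -> ('I_n -> C),
     [/\ is_path_Cn b, b 0 = x0 & forall t, in01 t -> Mult (b t) = a t].
Proof.
move=> hp h0; have hA := path_mpath hp.
have hsz : szn n 0 1 (Aof n a) by move=> t _; apply: size_vec.
have [b [pb cb]] := lift_all 0 (@cd_ge0 R) (@cd_sym R) (@cd_tri R) (@cd_refl R) (@cd_eq R)
   (n:=n) (u:=0) (v:=1) (A:=Aof n a) ler01 hsz hA.
have h00 : inI 0 1 (0 : R) by rewrite /inI lexx ler01.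
have szb : forall t, inI 0 1 t -> size (b t) = n.
  by move=> t ht; rewrite (perm_size (pb t ht)) hsz.
have hperm : perm_eq (vec x0) (b 0).
  rewrite perm_sym (permPl (pb 0 h00)); apply/MultE.
  by rewrite h0 (ys_spec (proj1 hp 0 h00)).
have [hs he] := alignP 0 hperm.
set sg := align 0 (vec x0) (b 0) in hs he.
have szsg : size sg = n by rewrite (perm_size hs) size_iota szb.
exists (fun t (i : 'I_n) => nth 0 (papp 0 sg (b t)) i); split.
- move=> t ht e e0; have [dl dl0 H] := cb t ht e e0; exists dl => // s hs' hst i.
  have := H s hs' hst => hc.
  have hs2 : isperm sg (size (b s)) by rewrite (szb s hs') -(szb 0 h00).
  have hc' := papp_all2 0 hs2 hc.
  by apply: (all2_nth 0 hc'); rewrite size_map szsg.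
- by apply: functional_extensionality => i; rewrite -he nth_vec.
- move=> t ht.
  change (seq_mset (vec (fun i : 'I_n => nth 0 (papp 0 sg (b t)) i)) = a t).
  rewrite vec_nth; last by rewrite size_map.
  rewrite -(ys_spec (proj1 hp t ht)); apply/eq_seq_msetP.
  rewrite (permPl (papp_perm 0 _)); first exact: pb.
  by rewrite (szb t ht) -(szb 0 h00).
Qed.

End Exist3.


Section Uniq1.
Variable R : realType.
Local Notation C := R[i].

Lemma undup_size_eqi (s t : seq C) : s =i t -> size (undup s) = size (undup t).
Proof.
move=> h; apply/eqP; rewrite eqn_leq; apply/andP; split; apply: uniq_leq_size;
  rewrite ?undup_uniq // => x; rewrite !mem_undup h //.
Qed.

Lemma D_shape n (x : 'I_n -> C) : size (Shape (Mult x)) = size (undup (vec x)).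
Proof.
rewrite /Shape size_sort size_map -(perm_size (perm_undup_mset _)).
apply: undup_size_eqi; apply: perm_mem; exact: perm_eq_seq_mset.
Qed.

Lemma Shape_pos (m : multiset C) : all (fun k => 0 < k)%N (Shape m).
Proof.
apply/allP => k; rewrite mem_sort => /mapP [c hc ->].
by rewrite mset_gt0 -msuppE.
Qed.

End Uniq1.

Lemma part_le_size lam mu : part_le lam mu -> all (fun k => 0 < k)%N mu -> (size mu <= size lam)%N.
Proof.
move=> [f hf] hpos.
have hsurj : forall j, j \in codom f.
  move=> j; apply: NNPP => hn.
  have h0 : nth 0%N mu j = 0%N.
    rewrite hf big1 // => i /eqP hi; exfalso; apply: hn; rewrite -hi codom_f //.
  have := allP hpos (nth 0%N mu j) (mem_nth _ (ltn_ord j)); rewrite h0.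
  by [].
pose g j := iinv (hsurj j).
have ginj : injective g by move=> j1 j2 e; have := congr1 f e; rewrite /g !f_iinv.
by have := leq_card g ginj; rewrite !card_ord.
Qed.

Section Uniq2.
Variable R : realType.
Local Notation C := R[i].
Local Notation d := (@cdist R).

Lemma sep_pairs (s : seq C) : exists2 r : R, 0 < r &
  forall x y, x \in s -> y \in s -> d x y < r -> x = y.
Proof.
elim: s => [|z s [r1 r10 IH]]; first by exists 1.
have [r2 r20 h2] := sep_ex (@cd_ge0 R) (@cd_eq R) s z.
exists (Num.min r1 r2); first by rewrite lt_min r10 r20.
move=> x y; rewrite !in_cons => /orP[/eqP hx|hx] /orP[/eqP hy|hy]; rewrite lt_min => /andP[d1 d2].
- by rewrite hx hy.
- rewrite hx in d2 *; have [e|ne] := eqVneq y z => //.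
  by have := h2 y hy ne; rewrite cd_sym; move=> h; exfalso; move: d2; rewrite ltNge h.
- rewrite hy in d2 *; have [e|ne] := eqVneq x z => //.
  by have := h2 x hx ne => h; exfalso; move: d2; rewrite ltNge h.
- exact: IH.
Qed.

Lemma uniq_map_inj (h : C -> C) (u : seq C) x y : uniq (map h u) -> x \in u -> y \in u ->
  h x = h y -> x = y.
Proof.
elim: u => [|z u IH] //= /andP[nz uu]; rewrite !in_cons => /orP[/eqP->|hx] /orP[/eqP->|hy] e //.
- by exfalso; move/negP: nz; apply; rewrite e; apply: map_f.
- by exfalso; move/negP: nz; apply; rewrite -e; apply: map_f.
- exact: IH.
Qed.

Lemma undup_map_le (h : C -> C) (s : seq C) : (size (undup (map h s)) <= size (undup s))%N.
Proof.
rewrite -(size_map h (undup s)); apply: uniq_leq_size; first exact: undup_uniq.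
move=> x; rewrite mem_undup => /mapP[y hy ->]; apply: map_f; by rewrite mem_undup.
Qed.

Lemma undup_map_inj (h : C -> C) (s : seq C) : size (undup (map h s)) = size (undup s) ->
  forall x y, x \in s -> y \in s -> h x = h y -> x = y.
Proof.
move=> hs x y hx hy e.
have me : undup (map h s) =i map h (undup s).
  move=> z; rewrite mem_undup; apply/mapP/mapP => [[w hw ->]|[w hw ->]].
  + by exists w; rewrite ?mem_undup.
  + by rewrite mem_undup in hw; exists w.
have := uniq_size_uniq (undup_uniq (map h s)) me.
rewrite size_map hs eqxx => hu; symmetry in hu.
apply: (uniq_map_inj (u := undup s) (h := h)) => //; rewrite ?mem_undup //.
Qed.

End Uniq2.

Section Uniq3.
Variable R : realType.
Local Notation C := R[i].
Local Notation d := (@cdist R).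
Variable n : nat.
Local Notation vec := (@vec R n).

Lemma vec_mem (x : 'I_n -> C) i : x i \in vec x.
Proof. by apply: map_f; rewrite mem_enum. Qed.

Lemma uniqueness (a : R -> multiset C) (x0 : 'I_n -> C) : weakly_increasing_shape a ->
  forall b1 b2 : R -> ('I_n -> C),
     is_path_Cn b1 -> b1 0 = x0 -> (forall t, in01 t -> Mult (b1 t) = a t) ->
     is_path_Cn b2 -> b2 0 = x0 -> (forall t, in01 t -> Mult (b2 t) = a t) ->
     forall t, in01 t -> b1 t = b2 t.
Proof.
move=> hw b1 b2 c1 e1 m1 c2 e2 m2.
have Dmono : forall s t, in01 s -> in01 t -> s <= t ->
    (size (undup (vec (b1 t))) <= size (undup (vec (b1 s))))%N.
  move=> s t hs ht st; rewrite -!D_shape (m1 s hs) (m1 t ht).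
  by apply: part_le_size (hw s t hs ht st) (Shape_pos _).
pose E := fun y : R => inI 0 1 y /\ forall s, inI 0 y s -> b1 s = b2 s.
have E0 : E 0.
  split; first by rewrite /inI lexx ler01.
  by move=> s hs; rewrite (inI_eq hs) e1 e2.
have [S [ub adh S1]] := @sup_ex R E 0 1 E0 (fun y hy => proj2 (andP (proj1 hy))).
have S0 : 0 <= S by apply: ub.
have hS : in01 S by rewrite /in01 S0 S1.
have eqS : b1 S = b2 S.
  apply: functional_extensionality => i; apply: cd_eq; apply/eqP; rewrite eq_le cd_ge0 andbT.
  apply/ler_addgt0Pr => e e0; rewrite add0r.
  have [dl1 dl10 H1] := c1 S hS (e / 2) ltac:(by rewrite divr_gt0).
  have [dl2 dl20 H2] := c2 S hS (e / 2) ltac:(by rewrite divr_gt0).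
  have [y [hy Hy] hyS] := adh (Num.min dl1 dl2) ltac:(by rewrite lt_min dl10 dl20).
  have yS : y <= S by apply: ub; split.
  have ey : b1 y = b2 y by apply: Hy; case/andP: (hy) => h _; rewrite /inI h lexx.
  have hy' : in01 y by [].
  have hyd : `|y - S| < Num.min dl1 dl2 by apply: absI; lra.
  move: hyd; rewrite lt_min => /andP[hd1 hd2].
  have := H1 y hy' hd1 i; have := H2 y hy' hd2 i.
  have := cd_tri (b1 S i) (b1 y i) (b2 S i); rewrite ey (cd_sym (b1 S i) (b2 y i)).
  lra.
have allS : forall s, inI 0 S s -> b1 s = b2 s.
  move=> s /andP[s0 sS]; case: (ltgtP s S) => h.
  - have [y [hy Hy] hyS] := adh (S - s) ltac:(by rewrite subr_gt0).
    by apply: Hy; rewrite /inI s0; apply: ltW; lra.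
  - by exfalso; move: sS; rewrite leNgt h.
  - by rewrite h.
have S_1 : S = 1.
  apply: NNPP => hne.
  have S1' : S < 1 by rewrite lt_neqAle S1 andbT; apply/eqP.
  set p := b1 S.
  have [r r0 hr] := sep_pairs (vec p).
  have [dl1 dl10 H1] := c1 S hS (r / 2) ltac:(by rewrite divr_gt0).
  have [dl2 dl20 H2] := c2 S hS (r / 2) ltac:(by rewrite divr_gt0).
  set dl := Num.min dl1 dl2.
  have claim : forall t, in01 t -> S <= t -> `|t - S| < dl -> b1 t = b2 t.
    move=> t ht St htS; move: (htS); rewrite lt_min => /andP[hd1 hd2].
    have cl1 : forall i, d (b1 t i) (p i) < r / 2 by move=> i; apply: H1.
    have cl2 : forall i, d (b2 t i) (p i) < r / 2 by move=> i; rewrite /p eqS; apply: H2.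
    have ha : forall i j, b1 t i = b1 t j -> p i = p j.
      move=> i j e; apply: hr; rewrite ?vec_mem //.
      have := cd_tri (p i) (b1 t i) (p j); have := cl1 i; have := cl1 j.
      rewrite (cd_sym (p i) (b1 t i)) e; lra.
    pose h := fun v : C => if [pick i | b1 t i == v] is Some i then p i else 0.
    have hv : forall j, h (b1 t j) = p j.
      move=> j; rewrite /h; case: pickP => [i /eqP hi | hn]; first exact: ha.
      by have := hn j; rewrite eqxx.
    have vp : vec p = map h (vec (b1 t)) by rewrite /vec -map_comp; apply: eq_map => j /=; rewrite hv.
    have Deq : size (undup (map h (vec (b1 t)))) = size (undup (vec (b1 t))).
      apply/eqP; rewrite eqn_leq undup_map_le -vp /=; exact: Dmono.
    have hd : forall i j, p i = p j -> b1 t i = b1 t j.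
      move=> i j e; apply: (undup_map_inj Deq); rewrite ?vec_mem //.
      by rewrite !hv.
    apply: functional_extensionality => i.
    have : b2 t i \in vec (b1 t).
      have hp : perm_eq (vec (b2 t)) (vec (b1 t)) by apply/MultE; rewrite m1 // m2.
      by rewrite -(perm_mem hp) vec_mem.
    case/mapP => j _ ej; rewrite ej; symmetry; apply: hd; apply: hr; rewrite ?vec_mem //.
    have := cd_tri (p i) (b2 t i) (p j); have := cl2 i; have := cl1 j.
    rewrite (cd_sym (p i) (b2 t i)) ej (cd_sym (p j) (p i)); lra.
  set y := Num.min 1 (S + dl / 2).
  have dl0 : 0 < dl by rewrite lt_min dl10 dl20.
  have Sy : S < y by rewrite lt_min S1' /=; lra.
  have Ey : E y.
    split; first by rewrite /inI ge_min lexx andbT; apply: le_trans S0 (ltW Sy).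
    move=> s /andP[s0 sy]; case: (leP s S) => sS; first by apply: allS; rewrite /inI s0.
    apply: claim; first by rewrite /in01 s0; apply: le_trans sy _; rewrite ge_min lexx.
      exact: ltW.
    have : s <= S + dl / 2 by apply: le_trans sy _; rewrite ge_min lexx orbT.
    by move=> h; apply: absI; lra.
  by have := ub y Ey; rewrite leNgt Sy.
move=> t ht; apply: allS; rewrite S_1; exact: ht.
Qed.

End Uniq3.


Theorem theorem8p3 (R : realType) (n : nat) (a : R -> multiset R[i])
    (x0 : 'I_n -> R[i]) :
  is_path_Multn n a -> Mult x0 = a 0 ->
  (exists b : R -> ('I_n -> R[i]),
     [/\ is_path_Cn b, b 0 = x0 & forall t, in01 t -> Mult (b t) = a t]) /\
  (weakly_increasing_shape a ->
   forall b1 b2 : R -> ('I_n -> R[i]),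
     is_path_Cn b1 -> b1 0 = x0 -> (forall t, in01 t -> Mult (b1 t) = a t) ->
     is_path_Cn b2 -> b2 0 = x0 -> (forall t, in01 t -> Mult (b2 t) = a t) ->
     forall t, in01 t -> b1 t = b2 t).
Proof.
move=> hp h0; split; first exact: existence hp h0.
by move=> hw; apply: uniqueness hw.
Qed.
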